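(* (1) Let $(A,\cdot,[-,-])$ be a Poisson algebra and $\mathcal{B}$ a nondegenerate symmetric bilinear form on $A$ that is invariant on $(A,\cdot)$ and a commutative 2-cocycle on $(A,[-,-])$. Define $\circ$ on $A$ by $\mathcal{B}(x\circ y,z)=\mathcal{B}(y,[x,z])$ for all $x,y,z$. Then $(A,\cdot,\circ)$ is a PCA algebra and $x\circ y-y\circ x=[x,y]$ for all $x,y$. (2) Conversely, let $(A,\cdot,\circ)$ be a PCA algebra and $[x,y]=x\circ y-y\circ x$. Then $A\ltimes_{-\mathcal{L}^*_{\cdot},-\mathcal{L}^*_{\circ}}A^*$ is a Poisson algebra, and the bilinear form $\mathcal{B}_d$ on $A\oplus A^*$ is invariant on its commutative associative product and a commutative 2-cocycle on its Lie bracket.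
   Context: Finite-dimensional spaces, characteristic zero. $\mathcal{L}_{\ast}(x)y=x\ast y$. For $\rho:A\to\mathrm{End}(V)$, $\rho^*:A\to\mathrm{End}(V^* )$ is $\langle\rho^*(x)v^*,u\rangle=-\langle v^*,\rho(x)u\rangle$. For a Poisson algebra $(A,\cdot,[-,-])$ and linear maps $\mu,\rho:A\to\mathrm{End}(V)$, $A\ltimes_{\mu,\rho}V$ is $A\oplus V$ with $(x,u)\cdot(y,v)=(x\cdot y,\mu(x)v+\mu(y)u)$ and $[(x,u),(y,v)]=([x,y],\rho(x)v-\rho(y)u)$. $\mathcal{B}_d((x,a^* ),(y,b^* ))=\langle x,b^*\rangle+\langle a^*,y\rangle$. A bilinear form $\mathcal{B}$ is invariant on $(A,\cdot)$ if $\mathcal{B}(x\cdot y,z)=\mathcal{B}(x,y\cdot z)$; a commutative 2-cocycle on a Lie algebra if it is symmetric and $\mathcal{B}([x,y],z)+\mathcal{B}([y,z],x)+\mathcal{B}([z,x],y)=0$. Poisson algebra: $(A,\cdot)$ commutative associative, $(A,[-,-])$ Lie, $[z,x\cdot y]=[z,x]\cdot y+x\cdot[z,y]$. Anti-pre-Lie algebra: $(A,\circ)$ with $x\circ(y\circ z)-y\circ(x\circ z)=[y,x]\circ z$ and $[x,y]\circ z+[y,z]\circ x+[z,x]\circ y=0$, where $[x,y]=x\circ y-y\circ x$. A PCA algebra is $(A,\cdot,\circ)$ with $(A,\cdot)$ commutative associative, $(A,\circ)$ anti-pre-Lie, and for all $x,y,z$: $(x\cdot y)\circ z=x\cdot(y\circ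 z)+y\cdot(x\circ z)$; $(x\circ y-y\circ x)\cdot z=y\cdot(x\circ z)-x\circ(y\cdot z)$; $z\circ(x\cdot y)+z\cdot(x\circ y)+z\cdot(y\circ x)-2(x\cdot y)\circ z=0$. *)

(* Defs.v *)
(* Finite-dimensional spaces over a field K of characteristic
   zero are modelled as row vectors 'rV[K]_n; the dual space A^* is also
   'rV[K]_n, paired with A by the standard pairing <a, x> = \sum_i a_i x_i. *)
From HB Require Import structures.
From mathcomp Require Import all_boot all_order all_algebra.
Set Implicit Arguments. Unset Strict Implicit. Unset Printing Implicit Defensive.
Import Order.TTheory GRing.Theory Num.Theory.
Local Open Scope ring_scope.

Section Defs.
Variable K : fieldType.

Definition pca_bilinear_op (V : lmodType K) (f : V -> V -> V) : Prop :=
  forall (a : K) (x y z : V),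
    f (a *: x + y) z = a *: f x z + f y z /\ f z (a *: x + y) = a *: f z x + f z y.

Definition pca_bilinear_form (V : lmodType K) (B : V -> V -> K) : Prop :=
  forall (a : K) (x y z : V),
    B (a *: x + y) z = a * B x z + B y z /\ B z (a *: x + y) = a * B z x + B z y.

Definition pca_symmetric_form (V : lmodType K) (B : V -> V -> K) : Prop :=
  forall x y, B x y = B y x.

Definition pca_nondegenerate (V : lmodType K) (B : V -> V -> K) : Prop :=
  forall x, (forall y, B x y = 0) -> x = 0.

Definition pca_invariant_form (V : lmodType K) (B : V -> V -> K) (mul : V -> V -> V) : Prop :=
  forall x y z, B (mul x y) z = B x (mul y z).

Definition comm_2cocycle (V : lmodType K) (B : V -> V -> K) (br : V -> V -> V) : Prop :=
  pca_symmetric_form B /\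
  forall x y z, B (br x y) z + B (br y z) x + B (br z x) y = 0.

Definition comm_assoc (V : lmodType K) (mul : V -> V -> V) : Prop :=
  pca_bilinear_op mul /\ (forall x y, mul x y = mul y x) /\
  (forall x y z, mul (mul x y) z = mul x (mul y z)).

Definition lie_algebra (V : lmodType K) (br : V -> V -> V) : Prop :=
  pca_bilinear_op br /\ (forall x, br x x = 0) /\
  (forall x y z, br x (br y z) + br y (br z x) + br z (br x y) = 0).

Definition poisson_algebra (V : lmodType K) (mul br : V -> V -> V) : Prop :=
  comm_assoc mul /\ lie_algebra br /\
  (forall x y z, br z (mul x y) = mul (br z x) y + mul x (br z y)).

Definition commutator (V : lmodType K) (circ : V -> V -> V) (x y : V) : V :=
  circ x y - circ y x.

Definition anti_pre_lie (V : lmodType K) (circ : V -> V -> V) : Prop :=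
  pca_bilinear_op circ /\
  (forall x y z, circ x (circ y z) - circ y (circ x z) = circ (commutator circ y x) z) /\
  (forall x y z, circ (commutator circ x y) z + circ (commutator circ y z) x
                 + circ (commutator circ z x) y = 0).

Definition PCA_algebra (V : lmodType K) (mul circ : V -> V -> V) : Prop :=
  comm_assoc mul /\ anti_pre_lie circ /\
  (forall x y z, circ (mul x y) z = mul x (circ y z) + mul y (circ x z)) /\
  (forall x y z, mul (circ x y - circ y x) z = mul y (circ x z) - circ x (mul y z)) /\
  (forall x y z, circ z (mul x y) + mul z (circ x y) + mul z (circ y x)
                 - (circ (mul x y) z) *+ 2 = 0).

Variable n : nat.
Notation A := 'rV[K]_n.

Definition pairing (a x : A) : K := \sum_(i < n) a 0 i * x 0 i.

(* dual representation rho^*: <rho^*(x) a, u> = - <a, rho(x) u>,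
   written out on the standard basis *)
Definition dual_rep (rho : A -> A -> A) (x a : A) : A :=
  \row_(j < n) (- pairing a (rho x (delta_mx 0 j))).

Definition Lmul (op : A -> A -> A) : A -> A -> A := fun x y => op x y.

(* semidirect product A \ltimes_{mu,rho} V with V = A^* *)
Definition sd_mul (mulA : A -> A -> A) (mu : A -> A -> A) (p q : A * A) : A * A :=
  (mulA p.1 q.1, mu p.1 q.2 + mu q.1 p.2).

Definition sd_br (brA : A -> A -> A) (rho : A -> A -> A) (p q : A * A) : A * A :=
  (brA p.1 q.1, rho p.1 q.2 - rho q.1 p.2).

Definition Bd (p q : A * A) : K := pairing q.2 p.1 + pairing p.2 q.1.

End Defs.

(* Main.v *)
Require Import Defs.
From HB Require Import structures.
From mathcomp Require Import all_boot all_order all_algebra.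
From mathcomp Require Import ring.
From Stdlib Require Import ClassicalEpsilon.
Import GRing.Theory.
Local Open Scope ring_scope.

Set Implicit Arguments. Unset Strict Implicit.

Section Lin.
Variable K : fieldType.
Variable V : lmodType K.

Section Op.
Variable f : V -> V -> V.
Hypothesis hf : pca_bilinear_op f.

Lemma opDl x y z : f (x + y) z = f x z + f y z.
Proof. by have [h _] := hf 1 x y z; rewrite scale1r in h; rewrite h scale1r. Qed.
Lemma opDr x y z : f z (x + y) = f z x + f z y.
Proof. by have [_ h] := hf 1 x y z; rewrite scale1r in h; rewrite h scale1r. Qed.
Lemma op0l z : f 0 z = 0.
Proof. by apply: (addrI (f 0 z)); rewrite -opDl !addr0. Qed.
Lemma op0r z : f z 0 = 0.
Proof. by apply: (addrI (f z 0)); rewrite -opDr !addr0. Qed.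
Lemma opZl a x z : f (a *: x) z = a *: f x z.
Proof. by have [h _] := hf a x 0 z; rewrite addr0 in h; rewrite h op0l addr0. Qed.
Lemma opZr a x z : f z (a *: x) = a *: f z x.
Proof. by have [_ h] := hf a x 0 z; rewrite addr0 in h; rewrite h op0r addr0. Qed.
Lemma opNl x z : f (- x) z = - f x z.
Proof. by rewrite -scaleN1r opZl scaleN1r. Qed.
Lemma opNr x z : f z (- x) = - f z x.
Proof. by rewrite -scaleN1r opZr scaleN1r. Qed.
Lemma opBl x y z : f (x - y) z = f x z - f y z.
Proof. by rewrite opDl opNl. Qed.
Lemma opBr x y z : f z (x - y) = f z x - f z y.
Proof. by rewrite opDr opNr. Qed.
Lemma opMnl x k z : f (x *+ k) z = f x z *+ k.
Proof. by elim: k => [|k IH]; rewrite ?mulr0n ?op0l // !mulrS opDl IH. Qed.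
End Op.

Section Form.
Variable B : V -> V -> K.
Hypothesis hB : pca_bilinear_form B.

Lemma fDl x y z : B (x + y) z = B x z + B y z.
Proof. by have [h _] := hB 1 x y z; rewrite scale1r in h; rewrite h mul1r. Qed.
Lemma fDr x y z : B z (x + y) = B z x + B z y.
Proof. by have [_ h] := hB 1 x y z; rewrite scale1r in h; rewrite h mul1r. Qed.
Lemma f0l z : B 0 z = 0.
Proof. by apply: (addrI (B 0 z)); rewrite -fDl !addr0. Qed.
Lemma f0r z : B z 0 = 0.
Proof. by apply: (addrI (B z 0)); rewrite -fDr !addr0. Qed.
Lemma fZl a x z : B (a *: x) z = a * B x z.
Proof. by have [h _] := hB a x 0 z; rewrite addr0 in h; rewrite h f0l addr0. Qed.
Lemma fZr a x z : B z (a *: x) = a * B z x.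
Proof. by have [_ h] := hB a x 0 z; rewrite addr0 in h; rewrite h f0r addr0. Qed.
Lemma fNl x z : B (- x) z = - B x z.
Proof. by rewrite -scaleN1r fZl mulN1r. Qed.
Lemma fNr x z : B z (- x) = - B z x.
Proof. by rewrite -scaleN1r fZr mulN1r. Qed.
Lemma fBl x y z : B (x - y) z = B x z - B y z.
Proof. by rewrite fDl fNl. Qed.
Lemma fBr x y z : B z (x - y) = B z x - B z y.
Proof. by rewrite fDr fNr. Qed.
Lemma fMnl x k z : B (x *+ k) z = B x z *+ k.
Proof. by elim: k => [|k IH]; rewrite ?mulr0n ?f0l // !mulrS fDl IH. Qed.

Hypothesis hnd : pca_nondegenerate B.
Lemma Bext u v : (forall w, B u w = B v w) -> u = v.
Proof.
move=> h; apply/eqP; rewrite -subr_eq0; apply/eqP/hnd => y.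
by rewrite fBl h subrr.
Qed.
End Form.

Lemma lc_helper (W : zmodType) (L R d : W) : L - R = d -> d = 0 -> L = R.
Proof. by move=> h1 h2; apply/eqP; rewrite -subr_eq0 h1 h2. Qed.

End Lin.


Section Riesz.
Variable K : fieldType.
Variable n : nat.
Notation A := 'rV[K]_n.

Lemma lin_expand (g : A -> K) :
  (forall a x y, g (a *: x + y) = a * g x + g y) ->
  forall u, g u = \sum_(j < n) u 0 j * g (delta_mx 0 j).
Proof.
move=> hg.
have gD x y : g (x + y) = g x + g y by rewrite -[x]scale1r hg mul1r scale1r.
have g0 : g 0 = 0 by apply: (addrI (g 0)); rewrite -gD !addr0.
have gZ a x : g (a *: x) = a * g x by rewrite -[a *: x]addr0 hg g0 addr0.
move=> u; rewrite {1}(row_sum_delta u).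
rewrite (big_morph g gD g0); apply: eq_bigr => j _; by rewrite gZ.
Qed.

Lemma riesz (B : A -> A -> K) : pca_bilinear_form B -> pca_nondegenerate B ->
  forall g : A -> K, (forall a x y, g (a *: x + y) = a * g x + g y) ->
  exists c, forall z, B c z = g z.
Proof.
move=> hB hnd g hg.
pose MB := \matrix_(i < n, j < n) B (delta_mx 0 i) (delta_mx 0 j).
have Bl v : forall a x y, B (a *: x + y) v = a * B x v + B y v by move=> a x y; case: (hB a x y v).
have Br u : forall a x y, B u (a *: x + y) = a * B u x + B u y by move=> a x y; case: (hB a x y u).
have BM u v : B u v = \sum_(j < n) v 0 j * (u *m MB) 0 j.
  rewrite (@lin_expand (B u) (Br u)); apply: eq_bigr => j _; congr (_ * _).
  rewrite (@lin_expand (B^~ (delta_mx 0 j)) (Bl (delta_mx 0 j))) mxE; apply: eq_bigr => i _; by rewrite mxE.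
have unitMB : MB \in unitmx.
  rewrite -row_free_unit -kermx_eq0; apply/eqP/row_matrixP => i.
  rewrite row0; apply: hnd => y; rewrite BM.
  have -> : row i (kermx MB) *m MB = 0 by rewrite -row_mul mulmx_ker row0.
  by apply: big1 => j _; rewrite mxE mulr0.
pose gr := \row_(j < n) g (delta_mx 0 j).
exists (gr *m invmx MB) => z.
rewrite BM mulmxKV // (@lin_expand g hg); apply: eq_bigr => j _; by rewrite mxE.
Qed.
End Riesz.


Lemma eqsub (W : zmodType) (l r : W) : l = r -> l - r = 0.
Proof. by move=> ->; rewrite subrr. Qed.

Lemma lcF (F : fieldType) (L R d : F) : L - R = d -> d = 0 -> L = R.
Proof. by move=> h1 h2; apply/eqP; rewrite -subr_eq0 h1 h2. Qed.

Ltac E h := match type of h with ?l = ?r => constr:(l - r) end.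
Ltac vring := apply/rowP => ?; rewrite !mxE; ring.
Ltac close0 := repeat match goal with H : ?l = ?r |- context[?l - ?r] => rewrite (eqsub H) end.
Ltac lcK d := apply: (lcF (d := d)); [ring | close0; ring].
Ltac lcV d := apply: (lc_helper (d := d)); [vring | close0; vring].

Section P1.
Variables (K : fieldType) (n : nat).
Notation A := 'rV[K]_n.
Variables (mul br : A -> A -> A) (B : A -> A -> K).
Hypotheses (hP : poisson_algebra mul br) (hB : pca_bilinear_form B)
  (hnd : pca_nondegenerate B) (hS : pca_symmetric_form B)
  (hI : pca_invariant_form B mul) (hc : comm_2cocycle B br).

Lemma mulbil : pca_bilinear_op mul. Proof. by case: hP => [[]]. Qed.
Lemma mulC x y : mul x y = mul y x. Proof. by case: hP => [[_ []]]. Qed.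
Lemma brbil : pca_bilinear_op br. Proof. by case: hP => [_ [[]]]. Qed.
Lemma bralt x : br x x = 0. Proof. by case: hP => [_ [[_ []]]]. Qed.
Lemma jac x y z : br x (br y z) + br y (br z x) + br z (br x y) = 0.
Proof. by case: hP => [_ [[_ []]]]. Qed.
Lemma leib x y z : br z (mul x y) = mul (br z x) y + mul x (br z y).
Proof. by case: hP => [_ []]. Qed.
Lemma Bcyc x y z : B (br x y) z + B (br y z) x + B (br z x) y = 0.
Proof. by case: hc. Qed.

Lemma brN x y : br x y = - br y x.
Proof.
have := bralt (x + y).
rewrite (opDl brbil) !(opDr brbil) !bralt add0r addr0 => h.
by apply/eqP; rewrite -addr_eq0 h.
Qed.

Lemma BmS x u w : B (mul x u) w = B u (mul x w).
Proof. by rewrite mulC hI. Qed.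

Variable circ : A -> A -> A.
Hypothesis hC : forall x y z, B (circ x y) z = B y (br x z).

Lemma Ccomm x y : circ x y - circ y x = br x y.
Proof.
apply: (Bext hB hnd) => w; rewrite (fBl hB) !hC.
have h := Bcyc x w y.
rewrite (brN w y) (brN y x) !(fNl hB) in h.
rewrite (hS y) (hS x).
let e := E h in lcK e.
Qed.

Lemma circbil : pca_bilinear_op circ.
Proof.
move=> a x y z; split; apply: (Bext hB hnd) => w.
  by rewrite (fDl hB) (fZl hB) !hC (opDl brbil) (opZl brbil) (fDr hB) (fZr hB).
by rewrite (fDl hB) (fZl hB) !hC (fDl hB) (fZl hB).
Qed.

Lemma apl1 x y z : circ x (circ y z) - circ y (circ x z) = circ (commutator circ y x) z.
Proof.
rewrite /commutator Ccomm.
have hv w : br y (br x w) - br x (br y w) = br (br y x) w.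
  have j := jac y x w.
  rewrite (brN w y) (opNr brbil) (brN w (br y x)) in j.
  let e := E j in lcV e.
apply: (Bext hB hnd) => w; rewrite (fBl hB) !hC.
by rewrite -(fBr hB) hv.
Qed.

Lemma Xexp u v w : br u (br v w) = circ u (circ v w) - circ u (circ w v) - circ (br v w) u.
Proof. by rewrite -Ccomm -(Ccomm v w) (opBr circbil). Qed.

Lemma apl2 (hK : [pchar K] =i pred0) x y z : circ (commutator circ x y) z + circ (commutator circ y z) x
                 + circ (commutator circ z x) y = 0.
Proof.
rewrite /commutator !Ccomm.
set S := _ + _ + _.
have key : S *+ 2 = 0.
  have J := jac x y z.
  have X1 := Xexp x y z; have X2 := Xexp y z x; have X3 := Xexp z x y.
  have A1 := apl1 x y z; have A2 := apl1 y z x; have A3 := apl1 z x y.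
  rewrite /commutator Ccomm in A1; rewrite /commutator Ccomm in A2;
    rewrite /commutator Ccomm in A3.
  have N1 : circ (br y x) z = - circ (br x y) z by rewrite (brN y x) (opNl circbil).
  have N2 : circ (br z y) x = - circ (br y z) x by rewrite (brN z y) (opNl circbil).
  have N3 : circ (br x z) y = - circ (br z x) y by rewrite (brN x z) (opNl circbil).
  rewrite /S.
  let a1 := E A1 in let a2 := E A2 in let a3 := E A3 in
  let n1 := E N1 in let n2 := E N2 in let n3 := E N3 in
  let x1 := E X1 in let x2 := E X2 in let x3 := E X3 in let j := E J in
  lcV (a1 + a2 + a3 + n1 + n2 + n3 - j + x1 + x2 + x3).
move: key; rewrite -scaler_nat => /eqP; rewrite scaler_eq0 => /orP [|/eqP //].
by move/pcharf0P: hK => ->.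
Qed.

End P1.

Section P1b.
Variables (K : fieldType) (n : nat).
Notation A := 'rV[K]_n.
Variables (mul br : A -> A -> A) (B : A -> A -> K).
Hypotheses (hP : poisson_algebra mul br) (hB : pca_bilinear_form B)
  (hnd : pca_nondegenerate B) (hS : pca_symmetric_form B)
  (hI : pca_invariant_form B mul) (hc : comm_2cocycle B br).
Variable circ : A -> A -> A.
Hypothesis hC : forall x y z, B (circ x y) z = B y (br x z).
Let brbil := brbil hP.
Let mulbil := mulbil hP.
Let brN := brN hP.
Let leib := leib hP.
Let mulC := mulC hP.
Let BmS := BmS hP hI.

Lemma pa x y z : circ (mul x y) z = mul x (circ y z) + mul y (circ x z).
Proof.
have V1 w : br (mul x y) w = br y (mul x w) + br x (mul y w).
  have N0 := brN (mul x y) w.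
  have L1 := leib x y w; have L2 := leib x w y; have L3 := leib y w x.
  have N1 : mul (br y x) w = - mul (br x y) w by rewrite (brN y x) (opNl mulbil).
  have N2 : mul x (br y w) = - mul x (br w y) by rewrite (brN y w) (opNr mulbil).
  have N3 : mul y (br x w) = - mul (br w x) y by rewrite (brN x w) (opNr mulbil) mulC.
  let n0 := E N0 in let l1 := E L1 in let l2 := E L2 in let l3 := E L3 in
  let n1 := E N1 in let n2 := E N2 in let n3 := E N3 in
  lcV (n0 - l1 - l2 - l3 - n1 - n2 - n3).
apply: (Bext hB hnd) => w.
by rewrite (fDl hB) !BmS !hC V1 (fDr hB).
Qed.

Lemma pb x y z : mul (circ x y - circ y x) z = mul y (circ x z) - circ x (mul y z).
Proof.
rewrite (Ccomm hP hB hnd hS hc hC).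
apply: (Bext hB hnd) => w.
rewrite (hI (br x y)) (fBl hB) (BmS y) !hC leib (fDr hB).
have h1 : B z (mul (br x y) w) = B (br x y) (mul z w) by rewrite (hS z) hI (mulC w z).
have h2 : B z (mul y (br x w)) = B (mul y z) (br x w) by rewrite (hS z) BmS (hS (br x w)).
let a := E h1 in let b := E h2 in lcK (- a - b).
Qed.

Lemma pc x y z : circ z (mul x y) + mul z (circ x y) + mul z (circ y x)
                 - (circ (mul x y) z) *+ 2 = 0.
Proof.
apply: (Bext hB hnd) => w.
rewrite (f0l hB) (fBl hB) !(fDl hB); rewrite !BmS !hC !leib.
rewrite (brN (mul x y) w) leib !(fDr hB) (fNr hB) !(fDr hB).
have H := Bcyc hc z w (mul x y).
rewrite leib (brN (mul x y) z) leib (fNl hB) !(fDl hB) in H.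
have c1 : B (mul x y) (br z w) = B (br z w) (mul x y) by rewrite hS.
have c2 : B y (mul (br x z) w) = B (br x z) (mul y w) by rewrite (hS y) hI (mulC w y).
have c3 : B y (mul z (br x w)) = B (br x w) (mul y z) by rewrite (hS y) BmS (mulC z y).
have c4 : B x (mul (br y z) w) = B (br y z) (mul x w) by rewrite (hS x) hI (mulC w x).
have c5 : B x (mul z (br y w)) = B (br y w) (mul x z) by rewrite (hS x) BmS (mulC z x).
have c6 : B z (mul (br w x) y) = - B (br x w) (mul y z) by rewrite (hS z) hI (brN w x) (fNl hB).
have c7 : B z (mul x (br w y)) = - B (br y w) (mul x z) by rewrite (hS z) BmS (brN w y) (fNl hB).
have k1 : B (mul (br w x) y) z = - B (br x w) (mul y z) by rewrite hI (brN w x) (fNl hB).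
have k2 : B (mul x (br w y)) z = - B (br y w) (mul x z) by rewrite BmS (brN w y) (fNl hB).
have k3 : B (mul (br z x) y) w = - B (br x z) (mul y w) by rewrite hI (brN z x) (fNl hB).
have k4 : B (mul x (br z y)) w = - B (br y z) (mul x w) by rewrite BmS (brN z y) (fNl hB).
rewrite c1 c2 c3 c4 c5 c6 c7; rewrite k1 k2 k3 k4 in H.
let h := E H in lcK h.
Qed.
End P1b.



Section Pair.
Variables (K : fieldType) (n : nat).
Notation A := 'rV[K]_n.

Lemma pbil : pca_bilinear_form (@pairing K n).
Proof.
move=> c a b x; split; rewrite /pairing mulr_sumr -big_split; apply: eq_bigr => i _;
  rewrite !mxE.
  by rewrite mulrDl mulrA.
by rewrite mulrDr mulrCA.
Qed.

Lemma pdelta (v : A) j : pairing v (delta_mx 0 j) = v 0 j.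
Proof.
rewrite /pairing (bigD1 j) //= big1 => [|i hij]; rewrite !mxE ?eqxx.
  by rewrite /= mulr1 addr0.
by rewrite (negbTE hij) andbF mulr0.
Qed.

Lemma pext (v w : A) : (forall u, pairing v u = pairing w u) -> v = w.
Proof. by move=> h; apply/rowP => j; rewrite -!pdelta h. Qed.

Lemma PD (f : A -> A -> A) : pca_bilinear_op f ->
  forall x a u, pairing (- dual_rep (Lmul f) x a) u = pairing a (f x u).
Proof.
move=> hf x a u.
have hg : forall c (v w : A), pairing a (f x (c *: v + w)) = c * pairing a (f x v) + pairing a (f x w).
  by move=> c v w; rewrite (opDr hf) (opZr hf) (fDr pbil) (fZr pbil).
rewrite (@lin_expand _ _ (fun u => pairing a (f x u)) hg u) /pairing.
by apply: eq_bigr => j _; rewrite !mxE opprK /Lmul mulrC.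
Qed.

Lemma dbil (f : A -> A -> A) : pca_bilinear_op f ->
  pca_bilinear_op (fun x a => - dual_rep (Lmul f) x a).
Proof.
move=> hf c x y z; split; apply: pext => u;
  rewrite (fDl pbil) (fZl pbil) !(PD hf).
  by rewrite (opDl hf) (opZl hf) (fDr pbil) (fZr pbil).
by rewrite (fDl pbil) (fZl pbil).
Qed.

Lemma pair_eq (p q : A * A) : p.1 = q.1 -> p.2 = q.2 -> p = q.
Proof. by case: p q => [? ?] [? ?] /= -> ->. Qed.

Lemma combil (circ : A -> A -> A) : pca_bilinear_op circ -> pca_bilinear_op (commutator circ).
Proof.
move=> hf c x y z; rewrite /commutator; split;
  rewrite (opDl hf) (opZl hf) (opDr hf) (opZr hf); vring.
Qed.
End Pair.

Section P2.
Variables (K : fieldType) (n : nat).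
Notation A := 'rV[K]_n.
Variables (mul circ : A -> A -> A).
Hypothesis hPCA : PCA_algebra mul circ.

Lemma mulbil2 : pca_bilinear_op mul. Proof. by case: hPCA => [[]]. Qed.
Lemma mulC2 x y : mul x y = mul y x. Proof. by case: hPCA => [[_ []]]. Qed.
Lemma mulA2 x y z : mul (mul x y) z = mul x (mul y z). Proof. by case: hPCA => [[_ []]]. Qed.
Lemma circbil2 : pca_bilinear_op circ. Proof. by case: hPCA => [_ [[]]]. Qed.
Lemma apl1b x y z : circ x (circ y z) - circ y (circ x z) = circ (commutator circ y x) z.
Proof. by case: hPCA => [_ [[_ []]]]. Qed.
Lemma apl2b x y z : circ (commutator circ x y) z + circ (commutator circ y z) x
                 + circ (commutator circ z x) y = 0.
Proof. by case: hPCA => [_ [[_ []]]]. Qed.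
Lemma pa2 x y z : circ (mul x y) z = mul x (circ y z) + mul y (circ x z).
Proof. by case: hPCA => [_ [_ []]]. Qed.
Lemma pb2 x y z : mul (circ x y - circ y x) z = mul y (circ x z) - circ x (mul y z).
Proof. by case: hPCA => [_ [_ [_ []]]]. Qed.
Lemma pc2 x y z : circ z (mul x y) + mul z (circ x y) + mul z (circ y x)
                 - (circ (mul x y) z) *+ 2 = 0.
Proof. by case: hPCA => [_ [_ [_ []]]]. Qed.

Notation br := (commutator circ).

Lemma JacC x y z : br x (br y z) + br y (br z x) + br z (br x y) = 0.
Proof.
have X u v w : br u (br v w) = circ u (circ v w) - circ u (circ w v) - circ (br v w) u.
  by rewrite {1}/commutator {1}/commutator (opBr circbil2).
have X1 := X x y z; have X2 := X y z x; have X3 := X z x y.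
have A1 := apl1b x y z; have A2 := apl1b y z x; have A3 := apl1b z x y.
have B1 := apl2b x y z; have B2 := apl2b y x z.
let x1 := E X1 in let x2 := E X2 in let x3 := E X3 in
let a1 := E A1 in let a2 := E A2 in let a3 := E A3 in
let b1 := E B1 in let b2 := E B2 in
lcV (x1 + x2 + x3 + a1 + a2 + a3 + b2 - b1).
Qed.

Lemma pbN x y z : mul z (circ x y) - mul z (circ y x) = mul y (circ x z) - circ x (mul y z).
Proof. by rewrite -pb2 (opBl mulbil2) !(mulC2 _ z). Qed.

Lemma LeibC x y z : br z (mul x y) = mul (br z x) y + mul x (br z y).
Proof.
have a1 := pa2 x y z.
have b1 := pbN x y z; have b2 := pbN x z y; have b3 := pbN y x z; have b4 := pbN y z x.
have c1 := pc2 x y z.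
rewrite (mulC2 z y) in b2; rewrite (mulC2 z x) in b4.
have m1 : mul (br z x) y = mul y (circ z x) - mul y (circ x z).
  by rewrite mulC2 /commutator (opBr mulbil2).
have m2 : mul x (br z y) = mul x (circ z y) - mul x (circ y z).
  by rewrite /commutator (opBr mulbil2).
have m0 : br z (mul x y) = circ z (mul x y) - circ (mul x y) z by [].
let a := E a1 in let b1 := E b1 in let b2 := E b2 in let b3 := E b3 in
let b4 := E b4 in let c := E c1 in
let m0 := E m0 in let m1 := E m1 in let m2 := E m2 in
lcV (a - b1 + c + b2 - b3 + b4 + m0 - m1 - m2).
Qed.
End P2.

Section P2b.
Variables (K : fieldType) (n : nat).
Notation A := 'rV[K]_n.
Variables (mul circ : A -> A -> A).
Hypothesis hPCA : PCA_algebra mul circ.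
Notation br := (commutator circ).
Notation mu := (fun x a => - dual_rep (Lmul mul) x a).
Notation rho := (fun x a => - dual_rep (Lmul circ) x a).

Let mulbil := mulbil2 hPCA.
Let circbil := circbil2 hPCA.
Let PDm := PD mulbil.
Let PDc := PD circbil.
Let pb := @pbil K n.

Lemma part2 : poisson_algebra (sd_mul mul mu) (sd_br br rho) /\
  pca_invariant_form (@Bd K n) (sd_mul mul mu) /\
  comm_2cocycle (@Bd K n) (sd_br br rho).
Proof.
split; [split; [|split] | split].
- split; [|split].
  + move=> c [x b] [y b'] [z d]; split; apply: pair_eq => /=.
    * exact: (mulbil c x y z).1.
    * apply: pext => u.
      rewrite !(fDl pb, fZl pb, PDm, opDl mulbil, opZl mulbil, fDr pb, fZr pb); ring.
    * exact: (mulbil c x y z).2.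
    * apply: pext => u.
      rewrite !(fDl pb, fZl pb, PDm, opDl mulbil, opZl mulbil, fDr pb, fZr pb); ring.
  + by move=> [x a] [y b]; apply: pair_eq => /=; [exact: (mulC2 hPCA) | exact: addrC].
  + move=> [x a] [y b] [z c]; apply: pair_eq => /=; first exact: (mulA2 hPCA).
    apply: pext => u; rewrite !(fDl pb, fNl pb, PDm).
    have m1 : mul (mul x y) u = mul y (mul x u) by rewrite (mulC2 hPCA x y) (mulA2 hPCA).
    have m2 : mul x (mul z u) = mul z (mul x u) by rewrite -(mulA2 hPCA) (mulC2 hPCA x z) (mulA2 hPCA).
    have m3 : mul y (mul z u) = mul (mul y z) u by rewrite (mulA2 hPCA).
    rewrite m1 m2 m3; ring.
- split; [|split].
  + move=> c [x b] [y b'] [z d]; split; apply: pair_eq => /=.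
    * exact: (combil circbil c x y z).1.
    * apply: pext => u.
      rewrite !(fDl pb, fBl pb, fNl pb, fZl pb, PDc, opDl circbil, opZl circbil, fDr pb, fZr pb); ring.
    * exact: (combil circbil c x y z).2.
    * apply: pext => u.
      rewrite !(fDl pb, fBl pb, fNl pb, fZl pb, PDc, opDl circbil, opZl circbil, fDr pb, fZr pb); ring.
  + by move=> [x a]; apply: pair_eq => /=; rewrite /commutator !subrr.
  + move=> [x a] [y b] [z c]; apply: pair_eq => /=; first exact: (JacC hPCA).
    apply: pext => u; rewrite (f0l pb) !(fDl pb, fBl pb, fNl pb, PDc).
    have h1 := congr1 (pairing a) (apl1b hPCA z y u).
    have h2 := congr1 (pairing b) (apl1b hPCA x z u).
    have h3 := congr1 (pairing c) (apl1b hPCA y x u).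
    rewrite (fBr pb) in h1; rewrite (fBr pb) in h2; rewrite (fBr pb) in h3.
    let e1 := E h1 in let e2 := E h2 in let e3 := E h3 in lcK (e1 + e2 + e3).
- move=> [x a] [y b] [z c]; apply: pair_eq => /=; first exact: (LeibC hPCA).
  apply: pext => u; rewrite !(fDl pb, fBl pb, fNl pb, PDc, PDm).
  have I1 w : mul w (circ z u) = mul (br z w) u + circ z (mul w u).
    by rewrite /commutator (pb2 hPCA) subrK.
  have I3 : circ (mul x y) u = circ x (mul y u) + circ y (mul x u).
    have a1 := pa2 hPCA x y u; have p1 := pbN hPCA x y u; have p2 := pbN hPCA y x u.
    let a := E a1 in let p := E p1 in let q := E p2 in lcV (a - p - q).
  rewrite !I1 I3 !(fDr pb); ring.
- move=> [x a] [y b] [z c]; rewrite /Bd /=; rewrite !(fDl pb, fNl pb, PDm).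
  rewrite (mulC2 hPCA y x) (mulC2 hPCA z x); ring.
- split.
  + by move=> p q; rewrite /Bd addrC.
  + move=> [x a] [y b] [z c]; rewrite /Bd /=; rewrite !(fDl pb, fBl pb, fNl pb, PDc).
    rewrite /commutator !(fBr pb); ring.
Qed.
End P2b.

Unset Implicit Arguments.

Theorem mainTheorem3 (K : fieldType) (hK : [pchar K] =i pred0) (n : nat) :
  (* (1) *)
  (forall (mul br : 'rV[K]_n -> 'rV[K]_n -> 'rV[K]_n) (B : 'rV[K]_n -> 'rV[K]_n -> K),
     poisson_algebra mul br ->
     pca_bilinear_form B -> pca_nondegenerate B -> pca_symmetric_form B ->
     pca_invariant_form B mul -> comm_2cocycle B br ->
     (exists circ : 'rV[K]_n -> 'rV[K]_n -> 'rV[K]_n,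
        forall x y z, B (circ x y) z = B y (br x z)) /\
     (forall circ : 'rV[K]_n -> 'rV[K]_n -> 'rV[K]_n,
        (forall x y z, B (circ x y) z = B y (br x z)) ->
        PCA_algebra mul circ /\ (forall x y, circ x y - circ y x = br x y)))
  /\
  (* (2) *)
  (forall (mul circ : 'rV[K]_n -> 'rV[K]_n -> 'rV[K]_n),
     PCA_algebra mul circ ->
     let br := commutator circ in
     let mu := fun x a => - dual_rep (Lmul mul) x a in
     let rho := fun x a => - dual_rep (Lmul circ) x a in
     poisson_algebra (sd_mul mul mu) (sd_br br rho) /\
     pca_invariant_form (@Bd K n) (sd_mul mul mu) /\
     comm_2cocycle (@Bd K n) (sd_br br rho)).
Proof.
split.
- move=> mul br B hP hB hnd hS hI hc; split.
  + have ex x y : exists c, forall z, B c z = B y (br x z).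
      apply: (riesz hB hnd) => a u v.
      by rewrite (opDr (brbil hP)) (opZr (brbil hP)) (fDr hB) (fZr hB).
    exists (fun x y => proj1_sig (constructive_indefinite_description _ (ex x y))).
    move=> x y z; exact: (proj2_sig (constructive_indefinite_description _ (ex x y))).
  + move=> circ hC; split; last exact: (Ccomm hP hB hnd hS hc hC).
    split; first by case: hP.
    split; first split.
    * exact: (circbil hP hB hnd hC).
    * split; first exact: (apl1 hP hB hnd hS hc hC).
      exact: (apl2 hP hB hnd hS hc hC hK).
    * split; first exact: (pa hP hB hnd hI hC).
      split; first exact: (pb hP hB hnd hS hI hc hC).
      exact: (pc hP hB hnd hS hI hc hC).
- move=> mul circ h br mu rho; exact: (part2 h).
Qed.
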